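(* Let $J\subseteq\mathbb R$ be an open interval and $A:J\to\mathbb R$ of class $C^1$. For every three-tuple $\mathbf z=(z_1,z_2,z_3)$ of distinct points on $\Gamma=\{x+iA(x):x\in J\}$, with $z_j=x_j+iA(x_j)$, one has $$\mathtt S[\mathrm{Re}K_\Gamma](\mathbf z)=2\sum_{\substack{j=1\\k<l}}^3\frac{1}{s^2(x_j)\ell_k^2\ell_l^2}\Bigl[A'(x_j)(x_j-x_k)-\bigl(A(x_j)-A(x_k)\bigr)\Bigr]\Bigl[A'(x_j)(x_j-x_l)-\bigl(A(x_j)-A(x_l)\bigr)\Bigr],$$ $$\mathtt S[\mathrm{Im}K_\Gamma](\mathbf z)=2\sum_{\substack{j=1\\k<l}}^3\frac{1}{s^2(x_j)\ell_k^2\ell_l^2}\Bigl[(x_k-x_j)+A'(x_j)\bigl(A(x_k)-A(x_j)\bigr)\Bigr]\Bigl[(x_l-x_j)+A'(x_j)\bigl(A(x_l)-A(x_j)\bigr)\Bigr].$$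
   Context: In the sums, for each $j\in\{1,2,3\}$ the indices $k<l$ are the two elements of $\{1,2,3\}\setminus\{j\}$. Notation: $s^2(x)=1+(A'(x))^2$, and $\ell_j^2=(x_l-x_k)^2+(A(x_l)-A(x_k))^2$ whenever $\{j,k,l\}=\{1,2,3\}$. The kernel (normalizing factor $1/(2\pi)$ omitted) is $K_\Gamma(w,z)=\dfrac{A'(x)-i}{s(x)\,[\,x-y+i(A(x)-A(y))\,]}$ for $w=x+iA(x)$, $z=y+iA(y)$, $x\neq y$, with real and imaginary parts $\mathrm{Re}K_\Gamma$, $\mathrm{Im}K_\Gamma$. For a real-valued $K$ and distinct $z_1,z_2,z_3$, $\mathtt S[K](\mathbf z)=\sum_{\sigma\in S_3}K(z_{\sigma(1)},z_{\sigma(2)})K(z_{\sigma(1)},z_{\sigma(3)})$. *)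

(* Defs.v *)
From HB Require Import structures.
From mathcomp Require Import all_boot all_order all_algebra all_fingroup.
From mathcomp Require Import all_classical all_reals all_analysis.
From mathcomp Require Import complex.
Set Implicit Arguments. Unset Strict Implicit. Unset Printing Implicit Defensive.
Import Order.TTheory GRing.Theory Num.Theory.
Import numFieldNormedType.Exports.
Local Open Scope ring_scope.

Section Defs.
Variable R : realType.

Definition open_itv (a b : \bar R) : set R := [set x | (a < x%:E)%E /\ (x%:E < b)%E].

Definition C1_on (J : set R) (A : R -> R) : Prop :=
  (forall x, J x -> derivable A x 1) /\
  (forall x, J x -> {for x, continuous (derive1 A)}).

Definition gpt (A : R -> R) (x : R) : R[i] := (x +i* A x)%C.

Definition sfun (A : R -> R) (x : R) : R := Num.sqrt (1 + (derive1 A x) ^+ 2).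

(* The kernel K_Gamma(w, z) for w = x + iA(x), z = y + iA(y) (x = Re w, y = Re z),
   normalizing factor 1/(2 pi) omitted. *)
Definition KGamma (A : R -> R) (w z : R[i]) : R[i] :=
  let x := complex.Re w in let y := complex.Re z in
  (((derive1 A x) +i* (-1)) / ((sfun A x)%:C * ((x - y) +i* (A x - A y))))%C.

Definition Sop (T : Type) (K : T -> T -> R) (z : 'I_3 -> T) : R :=
  \sum_(s : 'S_3) K (z (s 0)) (z (s 1)) * K (z (s 0)) (z (s 2%:R)).

Definition dist2 (A : R -> R) (a b : R) : R := (b - a) ^+ 2 + (A b - A a) ^+ 2.

(* summand of the Re formula for index j and the other indices k < l:
   1/(s^2(x_j) l_k^2 l_l^2) [..][..], with l_k^2 = |z_j - z_l|^2, l_l^2 = |z_j - z_k|^2. *)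
Definition termRe (A : R -> R) (xj xk xl : R) : R :=
  ((sfun A xj) ^+ 2 * dist2 A xj xl * dist2 A xj xk)^-1 *
  ((derive1 A xj) * (xj - xk) - (A xj - A xk)) *
  ((derive1 A xj) * (xj - xl) - (A xj - A xl)).

Definition termIm (A : R -> R) (xj xk xl : R) : R :=
  ((sfun A xj) ^+ 2 * dist2 A xj xl * dist2 A xj xk)^-1 *
  ((xk - xj) + (derive1 A xj) * (A xk - A xj)) *
  ((xl - xj) + (derive1 A xj) * (A xl - A xj)).

End Defs.

(* Main.v *)
Require Import Defs.
From HB Require Import structures.
From mathcomp Require Import all_boot all_order all_algebra all_fingroup.
From mathcomp Require Import all_classical all_reals all_analysis.
From mathcomp Require Import complex.
From mathcomp Require Import ring lra.
Import Order.TTheory GRing.Theory Num.Theory.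
Import numFieldNormedType.Exports.
Local Open Scope ring_scope.

Lemma ord3P (n : 'I_3) : n = 0 \/ n = 1 \/ n = 2%:R.
Proof.
case: n => [[|[|[|m]]] Hm]; [left|right;left|right;right|]; try by apply/val_inj.
by [].
Qed.

Lemma exS3 (i j k : 'I_3) : i != j -> i != k -> j != k ->
  exists s : 'S_3, [/\ s 0 = i, s 1 = j & s 2%:R = k].
Proof.
move=> ij ik jk.
pose f := fun n : 'I_3 => if n == 0 then i else if n == 1 then j else k.
have f0 : f 0 = i by rewrite /f eqxx.
have f1 : f 1 = j by rewrite /f.
have f2 : f 2%:R = k by rewrite /f.
have finj : injective f.
  move=> n m; case: (ord3P n) => [->|[->|->]]; case: (ord3P m) => [->|[->|->]];
  rewrite ?f0 ?f1 ?f2 // => E; move: ij ik jk; rewrite E ?eqxx //= ?andbF //.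
exists (perm finj); by rewrite !permE.
Qed.

Lemma sumS3 (R : nmodType) (G : 'I_3 -> 'I_3 -> 'I_3 -> R) :
  \sum_(s : 'S_3) G (s 0) (s 1) (s 2%:R) =
  G 0 1 2%:R + G 0 2%:R 1 + G 1 0 2%:R + G 1 2%:R 0 + G 2%:R 0 1 + G 2%:R 1 0.
Proof.
pose h := fun s : 'S_3 => (s 0, s 1, s 2%:R).
have hinj : {in [set: 'S_3] &, injective h}.
  move=> s t _ _ [e0 e1 e2]; apply/permP => n.
  by case: (ord3P n) => [->|[->|->]].
rewrite (eq_bigl [in [set: 'S_3]]); last by move=> s; rewrite inE.
rewrite -(big_imset (fun t => G t.1.1 t.1.2 t.2) hinj) /=.
have -> : h @: [set: 'S_3] = [set t | [&& t.1.1 != t.1.2, t.1.1 != t.2 & t.1.2 != t.2]].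
  apply/setP => -[[i j] k]; rewrite inE /=; apply/imsetP/idP.
    move=> [s _ [-> -> ->]].
    by rewrite !(inj_eq perm_inj).
  case/and3P=> ij ik jk; have [s [e0 e1 e2]] := @exS3 i j k ij ik jk.
  by exists s; rewrite ?inE // /h e0 e1 e2.
rewrite big_mkcond /=.
pose F2 := fun (ab : 'I_3 * 'I_3) (c : 'I_3) =>
  if [&& ab.1 != ab.2, ab.1 != c & ab.2 != c] then G ab.1 ab.2 c else 0.
rewrite (eq_bigr (fun t => F2 t.1 t.2)); last by move=> [[a b] c] _; rewrite inE.
rewrite -(pair_bigA +%R F2) /=.
pose F3 := fun a b => \sum_c F2 (a, b) c.
rewrite (eq_bigr (fun ab => F3 ab.1 ab.2)); last by case.
rewrite -(pair_bigA +%R F3) /= /F3 /F2 /=.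
rewrite !big_ord_recl !big_ord0 /=.
have e0 : ord0 = 0 :> 'I_3 by apply/val_inj.
have e1 : lift ord0 ord0 = 1 :> 'I_3 by apply/val_inj.
have e2 : lift ord0 (lift ord0 ord0) = 2%:R :> 'I_3 by apply/val_inj.
by rewrite e2 e1 e0 !add0r !addr0 !addrA.
Qed.

Section Main.
Variable R : realType.
Implicit Types (A : R -> R) (u v w : R).

Lemma cRe (p q e c d : R) : complex.Re ((p +i* q) / (e%:C * (c +i* d)))%C =
  p * ((e*c - 0*d) / ((e*c-0*d)^+2 + (e*d+0*c)^+2))
  - q * (-((e*d+0*c) / ((e*c-0*d)^+2 + (e*d+0*c)^+2))).
Proof. by []. Qed.

Lemma cIm (p q e c d : R) : complex.Im ((p +i* q) / (e%:C * (c +i* d)))%C =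
  p * (-((e*d+0*c) / ((e*c-0*d)^+2 + (e*d+0*c)^+2)))
  + q * ((e*c - 0*d) / ((e*c-0*d)^+2 + (e*d+0*c)^+2)).
Proof. by []. Qed.

Lemma sfun_gt0 A u : 0 < Defs.sfun A u.
Proof. rewrite /Defs.sfun sqrtr_gt0; have := sqr_ge0 (derive1 A u); lra. Qed.

Lemma sfun2 A u : Defs.sfun A u ^+ 2 = 1 + derive1 A u ^+ 2.
Proof. rewrite /Defs.sfun sqr_sqrtr //; have := sqr_ge0 (derive1 A u); lra. Qed.

Lemma dist2_neq0 A u v : u != v -> dist2 A u v != 0.
Proof.
move=> uv; rewrite /dist2 lt0r_neq0 //.
have h1 : 0 < (v - u) ^+ 2 by rewrite exprn_even_gt0 //= subr_eq0 eq_sym.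
have := sqr_ge0 (A v - A u); lra.
Qed.

Lemma ReK A u v : u != v ->
  complex.Re (KGamma A (gpt A u) (gpt A v)) =
  (derive1 A u * (u - v) - (A u - A v)) / (Defs.sfun A u * dist2 A u v).
Proof.
move=> uv; rewrite /KGamma /gpt /=.
have s0 := lt0r_neq0 (sfun_gt0 A u).
have D0 := dist2_neq0 A u v uv.
set s := Defs.sfun A u in s0 *.
have -> : (s * (u - v) - 0 * (A u - A v)) ^+ 2 + (s * (A u - A v) + 0 * (u - v)) ^+ 2
  = s ^+ 2 * dist2 A u v by rewrite /dist2; ring.
by field; rewrite s0 D0.
Qed.

Lemma ImK A u v : u != v ->
  complex.Im (KGamma A (gpt A u) (gpt A v)) =
  - ((u - v) + derive1 A u * (A u - A v)) / (Defs.sfun A u * dist2 A u v).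
Proof.
move=> uv; rewrite /KGamma /gpt /=.
have s0 := lt0r_neq0 (sfun_gt0 A u).
have D0 := dist2_neq0 A u v uv.
set s := Defs.sfun A u in s0 *.
have -> : (s * (u - v) - 0 * (A u - A v)) ^+ 2 + (s * (A u - A v) + 0 * (u - v)) ^+ 2
  = s ^+ 2 * dist2 A u v by rewrite /dist2; ring.
by field; rewrite s0 D0.
Qed.

Lemma prodRe A u v w : u != v -> u != w ->
  complex.Re (KGamma A (gpt A u) (gpt A v)) * complex.Re (KGamma A (gpt A u) (gpt A w))
  = termRe A u v w.
Proof.
move=> uv uw; rewrite !ReK // /termRe expr2 !invfM; ring.
Qed.

Lemma prodIm A u v w : u != v -> u != w ->
  complex.Im (KGamma A (gpt A u) (gpt A v)) * complex.Im (KGamma A (gpt A u) (gpt A w))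
  = termIm A u v w.
Proof.
move=> uv uw; rewrite !ImK // /termIm expr2 !invfM; ring.
Qed.

Lemma termReC A u v w : termRe A u v w = termRe A u w v.
Proof. rewrite /termRe !invfM; ring. Qed.

Lemma termImC A u v w : termIm A u v w = termIm A u w v.
Proof. rewrite /termIm !invfM; ring. Qed.

End Main.

Theorem lemma2p1 (R : realType) (a b : \bar R) (A : R -> R)
  (hA : C1_on (open_itv a b) A)
  (x : 'I_3 -> R) (hxJ : forall j, open_itv a b (x j))
  (hdist : injective (fun j => gpt A (x j))) :
  Sop (fun w z => complex.Re (KGamma A w z)) (fun j => gpt A (x j)) =
    2 * (termRe A (x 0) (x 1) (x 2%:R) + termRe A (x 1) (x 0) (x 2%:R)
         + termRe A (x 2%:R) (x 0) (x 1))
  /\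
  Sop (fun w z => complex.Im (KGamma A w z)) (fun j => gpt A (x j)) =
    2 * (termIm A (x 0) (x 1) (x 2%:R) + termIm A (x 1) (x 0) (x 2%:R)
         + termIm A (x 2%:R) (x 0) (x 1)).
Proof.
have hx : forall i j : 'I_3, i != j -> x i != x j.
  move=> i j; apply: contra => /eqP e; apply/eqP; apply: hdist => /=.
  by rewrite e.
have x01 : x 0 != x 1 by apply: hx.
have x02 : x 0 != x 2%:R by apply: hx.
have x12 : x 1 != x 2%:R by apply: hx.
have x10 : x 1 != x 0 by rewrite eq_sym.
have x20 : x 2%:R != x 0 by rewrite eq_sym.
have x21 : x 2%:R != x 1 by rewrite eq_sym.
split; rewrite /Sop.
- rewrite (@sumS3 _ (fun i j k => complex.Re (KGamma A (gpt A (x i)) (gpt A (x j))) *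
                                complex.Re (KGamma A (gpt A (x i)) (gpt A (x k))))).
  rewrite !prodRe //.
  rewrite (termReC _ A (x 0)) (termReC _ A (x 1) (x 2%:R)) (termReC _ A (x 2%:R) (x 1)).
  ring.
- rewrite (@sumS3 _ (fun i j k => complex.Im (KGamma A (gpt A (x i)) (gpt A (x j))) *
                                complex.Im (KGamma A (gpt A (x i)) (gpt A (x k))))).
  rewrite !prodIm //.
  rewrite (termImC _ A (x 0)) (termImC _ A (x 1) (x 2%:R)) (termImC _ A (x 2%:R) (x 1)).
  ring.
Qed.
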